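(* Let $p$ be a prime, $n\ge 1$, let $F:\mathbb{F}_{p^n}\rightarrow \mathbb{F}_{p^n}$ be any function and let $\alpha\in\mathbb{F}_{p^n}$. Then for all $x\in\mathbb{F}_{p^n}$, \[\Delta_{\underbrace{\alpha,\alpha,\dots,\alpha}_{p-1}} F(x)= -\Delta_{\alpha,2\alpha,\dots,(p-1)\alpha} F(x).\]
   Context: For $F:\mathbb{F}_{p^n}\to\mathbb{F}_{p^n}$ and $\alpha\in\mathbb{F}_{p^n}$, the (first-order) discrete derivative is $\Delta_\alpha F(x)=F(x+\alpha)-F(x)$. For directions $\alpha_1,\dots,\alpha_d\in\mathbb{F}_{p^n}$ the $d$-th order derivative is defined recursively by $\Delta_{\alpha_1,\dots,\alpha_d}F=\Delta_{\alpha_1}\Delta_{\alpha_2,\dots,\alpha_d}F$, equivalently \[\Delta_{\alpha_1,\dots,\alpha_d} F(x)=\sum_{j=0}^{d}(-1)^{d-j}\sum_{\{i_1,\dots,i_j\}\subseteq\{1,\dots,d\}}F\Big(x+\sum_{k=1}^j\alpha_{i_k}\Big).\] Here $k\alpha$ for an integer $k$ denotes the $k$-fold sum of $\alpha$. *)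

(* Defs.v *)
From HB Require Import structures.
From mathcomp Require Import all_boot all_order all_algebra all_field.
Set Implicit Arguments. Unset Strict Implicit. Unset Printing Implicit Defensive.
Import GRing.Theory.
Local Open Scope ring_scope.

Definition ddelta (K : zmodType) (a : K) (F : K -> K) : K -> K :=
  fun x => F (x + a) - F x.

Fixpoint hdelta (K : zmodType) (s : seq K) (F : K -> K) : K -> K :=
  match s with
  | [::] => F
  | a :: s' => ddelta a (hdelta s' F)
  end.

(* Main.v *)
Require Import Defs.
From HB Require Import structures.
From mathcomp Require Import all_boot all_order all_algebra all_field.
Import GRing.Theory.
Local Open Scope ring_scope.

Section Act.
Variables (K : fieldType) (alpha : K).

Definition act (q : {poly K}) (G : K -> K) (x : K) : K :=
  \sum_(k < size q) q`_k * G (x + alpha *+ k).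

Lemma actW (q : {poly K}) (G : K -> K) (x : K) N : (size q <= N)%N ->
  act q G x = \sum_(k < N) q`_k * G (x + alpha *+ k).
Proof.
move=> le; rewrite /act (big_ord_widen N (fun k => q`_k * G (x + alpha *+ k)) le).
rewrite big_mkcond /=; apply: eq_bigr => k _.
case: ifP => // /negbT; rewrite -leqNgt => h.
by rewrite nth_default // mul0r.
Qed.

Lemma actB (q r : {poly K}) (G : K -> K) (x : K) : act (q - r) G x = act q G x - act r G x.
Proof.
pose N := maxn (size q) (size r).
have hq : (size q <= N)%N by rewrite leq_maxl.
have hr : (size r <= N)%N by rewrite leq_maxr.
have hqr : (size (q - r)%R <= N)%N.
  by apply: leq_trans (size_polyD q (-r)) _; rewrite size_opp geq_max hq hr.
rewrite (actW _ _ _ _ hqr) (actW _ _ _ _ hq) (actW _ _ _ _ hr) -sumrB.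
by apply: eq_bigr => k _; rewrite coefB mulrBl.
Qed.

Lemma actXn i (q : {poly K}) (G : K -> K) (x : K) : act ('X^i * q) G x = act q G (x + alpha *+ i).
Proof.
have hs : (size ('X^i * q)%R <= i + size q)%N.
  have [->|nz] := eqVneq q 0; first by rewrite mulr0 size_poly0.
  by rewrite mulrC size_mulXn.
rewrite (actW _ _ _ _ hs) big_split_ord /= big1 ?add0r; last first.
  by move=> k _; rewrite coefXnM /= ltn_ord mul0r.
rewrite /act; apply: eq_bigr => k _; rewrite coefXnM /=.
rewrite ltnNge leq_addr /= addKn mulrnDr addrA //.
Qed.

Lemma actXn1 i (q : {poly K}) (G : K -> K) (x : K) :
  act (('X^i - 1) * q) G x = act q G (x + alpha *+ i) - act q G x.
Proof. by rewrite mulrBl mul1r actB actXn. Qed.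

Lemma hdelta_act (s : seq nat) (F : K -> K) (x : K) :
  hdelta (map (fun i => alpha *+ i) s) F x = act (\prod_(i <- s) ('X^i - 1)) F x.
Proof.
elim: s x => [|i s IH] x /=.
  rewrite big_nil /act size_poly1 big_ord1 coefC /= mul1r mulr0n addr0 //.
by rewrite big_cons actXn1 /ddelta !IH.
Qed.

End Act.

Theorem lemma1 (p n : nat) (K : finFieldType) (F : K -> K) (alpha : K) :
  prime p -> (1 <= n)%N -> p \in [pchar K] -> #|K| = (p ^ n)%N ->
  forall x : K,
    hdelta (nseq p.-1 alpha) F x
    = - hdelta (mkseq (fun i => alpha *+ i.+1) p.-1) F x.
Proof.
move=> pp _ chK _ x.
have e1 : nseq p.-1 alpha = map (fun i => alpha *+ i) (nseq p.-1 1%N).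
  by rewrite map_nseq mulr1n.
have e2 : mkseq (fun i => alpha *+ i.+1) p.-1
          = map (fun i => alpha *+ i) (iota 1 p.-1).
  by rewrite /mkseq (iotaDl 1 0) -map_comp.
rewrite e1 e2 !hdelta_act.
set Q := \prod_(i <- nseq p.-1 1%N) _.
set P := \prod_(i <- iota 1 p.-1) _.
have hQ : Q = ('X - 1) ^+ p.-1.
  rewrite /Q big_nseq expr1; elim: p.-1 => [|m IH] /=; first by rewrite expr0.
  by rewrite IH exprS.
pose H : {poly K} := \prod_(i <- iota 1 p.-1) \sum_(j < i) 'X^j.
have hP : P = ('X - 1) ^+ p.-1 * H.
  rewrite /P /H (eq_bigr (fun i => ('X - 1) * \sum_(j < i) 'X^j)); last first.
    by move=> i _; rewrite subrX1.
  rewrite big_split /=; congr (_ * _).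
  rewrite -[in RHS](size_iota 1 p.-1); elim: (iota 1 p.-1) => [|a s IH].
    by rewrite big_nil expr0.
  by rewrite big_cons IH /= exprS.
have hH1 : H.[1] = ((p.-1)`!)%:R.
  rewrite /H horner_prod fact_prod /index_iota subn1 /= natr_prod.
  apply: eq_bigr => i _.
  rewrite horner_sum (eq_bigr (fun _ => 1)); last by move=> j _; rewrite hornerXn expr1n.
  by rewrite sumr_const card_ord.
have hW : ((p.-1)`!)%:R + 1 = 0 :> K.
  have p1 : (1 < p)%N by apply: prime_gt1.
  have := Wilson p1; rewrite pp => /esym.
  by rewrite (dvdn_pcharf chK) -mulrSr => /eqP.
have hroot : root (H + 1) 1 by rewrite /root hornerD hornerC hH1 hW.
have [R hR] := factor_theorem _ _ hroot.
have chP : p \in [pchar {poly K}] by rewrite pchar_poly.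
have hXp : ('X - 1) ^+ p = 'X^p - 1 :> {poly K}.
  rewrite -(pFrobenius_autE chP) pFrobenius_autB_comm; last exact: commr1.
  by rewrite pFrobenius_aut1 pFrobenius_autE.
have hQP : Q = ('X^p - 1) * R - P.
  have e : ('X^p - 1) = ('X - 1) ^+ p.-1 * ('X - 1) :> {poly K}.
    by rewrite -hXp -exprSr prednK // prime_gt0.
  rewrite polyC1 in hR.
  rewrite hP hQ e -mulrA (mulrC ('X - 1) R) -hR mulrDr mulr1.
  by rewrite [_ * H + _]addrC addrK.
rewrite hQP actB.
have -> : act _ alpha (('X^p - 1) * R) F x = 0.
  by rewrite actXn1 (mulrn_pchar chK) addr0 subrr.
by rewrite sub0r.
Qed.
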